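(* Let $n\ge 2$, $1\le r\le n-1$, and let $h(q)=q^n+q^ra_r+q^{r-1}a_{r-1}+\dots+qa_1+a_0$ with $a_0,\dots,a_r\in\mathbb{H}$ and $a_r\neq 0$. Put $\lambda=\big(\max_{0\le j\le r}|a_j|\big)^{1/n}$. Then every zero $q\in\mathbb{H}$ of $h$ satisfies $$|q|\le \lambda+\max\{\lambda^2,\lambda^{r+1}\}.$$
   Context: $\mathbb{H}$ denotes the real quaternions with the Euclidean norm $|q|=\sqrt{q\bar q}$. The polynomial $h$ (whose coefficients of $q^{r+1},\dots,q^{n-1}$ vanish) has coefficients written to the right of the powers and is evaluated at $q\in\mathbb{H}$ by direct substitution, $h(q)=q^n+q^ra_r+\dots+qa_1+a_0$; a zero of $h$ is a $q\in\mathbb{H}$ with $h(q)=0$. *)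

(* Defs.v *)
From Stdlib Require Import Reals.
Open Scope R_scope.

Record quat : Type := Quat { re : R; qi : R; qj : R; qk : R }.

Definition qzero : quat := Quat 0 0 0 0.
Definition qone : quat := Quat 1 0 0 0.

Definition qadd (p q : quat) : quat :=
  Quat (re p + re q) (qi p + qi q) (qj p + qj q) (qk p + qk q).

(* Hamilton product (i^2 = j^2 = k^2 = ijk = -1). *)
Definition qmul (p q : quat) : quat :=
  Quat (re p * re q - qi p * qi q - qj p * qj q - qk p * qk q)
       (re p * qi q + qi p * re q + qj p * qk q - qk p * qj q)
       (re p * qj q - qi p * qk q + qj p * re q + qk p * qi q)
       (re p * qk q + qi p * qj q - qj p * qi q + qk p * re q).

Fixpoint qpow (q : quat) (n : nat) : quat :=
  match n with
  | O => qone
  | S m => qmul q (qpow q m)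
  end.

Definition qnorm (q : quat) : R :=
  sqrt (re q * re q + qi q * qi q + qj q * qj q + qk q * qk q).

Fixpoint qlower (a : nat -> quat) (q : quat) (r : nat) : quat :=
  match r with
  | O => qmul (qpow q 0) (a O)
  | S m => qadd (qlower a q m) (qmul (qpow q (S m)) (a (S m)))
  end.

Definition hpoly (n r : nat) (a : nat -> quat) (q : quat) : quat :=
  qadd (qpow q n) (qlower a q r).

Fixpoint maxnorm (a : nat -> quat) (r : nat) : R :=
  match r with
  | O => qnorm (a O)
  | S m => Rmax (maxnorm a m) (qnorm (a (S m)))
  end.

(* lambda = (max_j |a_j|)^(1/n); the max is > 0 under the hypothesis a_r <> 0,
   so Rpower (real exponent of a positive base) is the genuine n-th root. *)
Definition lam (n r : nat) (a : nat -> quat) : R :=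
  Rpower (maxnorm a r) (/ INR n).

(* Main.v *)
Require Import Defs.
From Stdlib Require Import Reals Lra Lia Psatz.
Open Scope R_scope.

Definition N4 (q : quat) := re q * re q + qi q * qi q + qj q * qj q + qk q * qk q.

Lemma N4_ge0 q : 0 <= N4 q.
Proof. unfold N4; nra. Qed.

Lemma qnorm_mul p q : qnorm (qmul p q) = qnorm p * qnorm q.
Proof.
  unfold qnorm. rewrite <- sqrt_mult by (fold (N4 p) (N4 q); apply N4_ge0).
  f_equal. destruct p, q; simpl; ring.
Qed.

Lemma qnorm_add p q : qnorm (qadd p q) <= qnorm p + qnorm q.
Proof.
  destruct p as [a b c d], q as [e f g h]. unfold qnorm; simpl.
  set (A := a*a+b*b+c*c+d*d). set (B := e*e+f*f+g*g+h*h).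
  assert (HA : 0 <= A) by (unfold A; nra).
  assert (HB : 0 <= B) by (unfold B; nra).
  set (D := a*e+b*f+c*g+d*h).
  assert (HD : D <= sqrt A * sqrt B).
  { rewrite <- sqrt_mult by lra.
    apply Rle_trans with (Rabs D). apply Rle_abs.
    rewrite <- sqrt_Rsqr_abs. apply sqrt_le_1_alt. unfold Rsqr, D, A, B.
    assert (E : (a*a+b*b+c*c+d*d)*(e*e+f*f+g*g+h*h) - (a*e+b*f+c*g+d*h)*(a*e+b*f+c*g+d*h) = (a*f-b*e)^2 + (a*g-c*e)^2 + (a*h-d*e)^2 + (b*g-c*f)^2 + (b*h-d*f)^2 + (c*h-d*g)^2) by ring.
    assert (0 <= (a*f-b*e)^2 + (a*g-c*e)^2 + (a*h-d*e)^2 + (b*g-c*f)^2 + (b*h-d*f)^2 + (c*h-d*g)^2).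
    { repeat apply Rplus_le_le_0_compat; apply pow2_ge_0. }
    lra. }
  assert (Hsa := sqrt_pos A). assert (Hsb := sqrt_pos B).
  rewrite <- (sqrt_pow2 (sqrt A + sqrt B)) by lra.
  apply sqrt_le_1_alt.
  replace ((sqrt A + sqrt B)^2) with (sqrt A * sqrt A + sqrt B * sqrt B + 2 * (sqrt A * sqrt B)) by ring.
  rewrite !sqrt_sqrt by lra. unfold A, B, D in *. nra.
Qed.

Lemma qnorm_pow q n : qnorm (qpow q n) = qnorm q ^ n.
Proof.
  induction n; simpl.
  - unfold qnorm, qone; simpl. replace (1*1+0*0+0*0+0*0) with 1 by ring. apply sqrt_1.
  - rewrite qnorm_mul, IHn. reflexivity.
Qed.

Lemma qnorm_ge0 q : 0 <= qnorm q.
Proof. apply sqrt_pos. Qed.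

Lemma maxnorm_ge a r : qnorm (a r) <= maxnorm a r /\ 0 <= maxnorm a r.
Proof.
  destruct r; simpl. split; [lra| apply qnorm_ge0].
  split. apply Rmax_r. apply Rle_trans with (qnorm (a (S r))). apply qnorm_ge0. apply Rmax_r.
Qed.

Lemma qlower_bound a q r :
  qnorm (qlower a q r) <= maxnorm a r * sum_f_R0 (fun j => qnorm q ^ j) r.
Proof.
  induction r; cbn [qlower sum_f_R0 maxnorm].
  - rewrite qnorm_mul, qnorm_pow. simpl. lra.
  - eapply Rle_trans. apply qnorm_add.
    rewrite qnorm_mul, qnorm_pow.
    assert (Hs : 0 <= sum_f_R0 (fun j => qnorm q ^ j) r).
    { apply cond_pos_sum. intro; apply pow_le, qnorm_ge0. }
    assert (Hp : 0 <= qnorm q * qnorm q ^ r) by (apply Rmult_le_pos; [apply qnorm_ge0|apply pow_le, qnorm_ge0]).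
    assert (H1 : maxnorm a r * sum_f_R0 (fun j => qnorm q ^ j) r <= Rmax (maxnorm a r) (qnorm (a (S r))) * sum_f_R0 (fun j => qnorm q ^ j) r).
    { apply Rmult_le_compat_r; [lra| apply Rmax_l]. }
    assert (H2 : qnorm q * qnorm q ^ r * qnorm (a (S r)) <= qnorm q * qnorm q ^ r * Rmax (maxnorm a r) (qnorm (a (S r)))).
    { apply Rmult_le_compat_l; [lra| apply Rmax_r]. }
    change (qnorm q ^ S r) with (qnorm q * qnorm q ^ r).
    rewrite Rmult_plus_distr_l. lra.
Qed.

Lemma sumA (l t c : R) r : 0 <= t ->
  (forall j, (1 <= j <= r)%nat -> l ^ j <= c) ->
  sum_f_R0 (fun j => l ^ j * t ^ j) r <= 1 + c * (sum_f_R0 (fun j => t ^ j) r - 1).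
Proof.
  intros Ht H. induction r; simpl.
  - lra.
  - assert (IH : sum_f_R0 (fun j => l ^ j * t ^ j) r <= 1 + c * (sum_f_R0 (fun j => t ^ j) r - 1)).
    { apply IHr. intros; apply H; lia. }
    assert (Hc : l * l ^ r <= c) by (apply (H (S r)); lia).
    assert (0 <= t * t ^ r) by (apply Rmult_le_pos; [lra|apply pow_le; lra]).
    nra.
Qed.

Lemma key (l t : R) (n r : nat) : 0 < l -> (1 <= r)%nat -> (r + 1 <= n)%nat ->
  t ^ n <= sum_f_R0 (fun j => l ^ j * t ^ j) r -> t <= 1 + Rmax l (l ^ r).
Proof.
  intros Hl Hr Hn Hs. set (c := Rmax l (l ^ r)).
  apply Rnot_lt_le. intro Ht.
  assert (Hc0 : l <= c) by apply Rmax_l.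
  assert (Hcj : forall j, (1 <= j <= r)%nat -> l ^ j <= c).
  { intros j Hj. destruct (Rle_dec l 1).
    - destruct j. lia. simpl. apply Rle_trans with (l * 1); [|lra].
      apply Rmult_le_compat_l; [lra|]. rewrite <- (pow1 j). apply pow_incr; lra.
    - apply Rle_trans with (l ^ r). apply Rle_pow; [lra|lia]. apply Rmax_r. }
  assert (Ht1 : 1 < t) by lra.
  pose proof (sumA l t c r ltac:(lra) Hcj) as HA.
  pose proof (GP_finite t r) as HG.
  assert (Htr : 1 < t ^ r) by (apply Rlt_pow_R1; [lra|lia]).
  assert (Hr1 : t ^ (r + 1) = t * t ^ r) by (rewrite Nat.add_1_r; reflexivity).
  set (S := sum_f_R0 (fun j => t ^ j) r) in *.
  assert (HS : (t - 1) * (S - 1) = t ^ (r+1) - t) by lra.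
  assert (HS1 : 0 < S - 1).
  { assert (0 < (t-1)*(S-1)) by nra.
    destruct (Rle_lt_dec (S-1) 0); [|lra]. nra. }
  assert (c * (S - 1) < (t - 1) * (S - 1)) by (apply Rmult_lt_compat_r; lra).
  assert (t ^ (r+1) <= t ^ n) by (apply Rle_pow; [lra|lia]).
  lra.
Qed.

Theorem theorem4 (n r : nat) (a : nat -> quat) :
  (2 <= n)%nat -> (1 <= r)%nat -> (r <= n - 1)%nat ->
  a r <> qzero ->
  forall q : quat, hpoly n r a q = qzero ->
  qnorm q <= lam n r a + Rmax (lam n r a ^ 2) (lam n r a ^ (r + 1)).
Proof.
  intros Hn Hr Hrn Har q Hq.
  set (M := maxnorm a r).
  assert (HM : 0 < M).
  { destruct (maxnorm_ge a r) as [H1 H2]. fold M in H1, H2.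
    destruct (Rle_lt_dec (qnorm (a r)) 0); [|lra].
    exfalso. apply Har.
    assert (Hz : N4 (a r) = 0).
    { apply sqrt_eq_0. apply N4_ge0. unfold qnorm in *. fold (N4 (a r)) in *.
      pose proof (sqrt_pos (N4 (a r))). lra. }
    unfold N4 in Hz. destruct (a r) as [x y z w]; simpl in Hz.
    unfold qzero. f_equal; nra. }
  set (l := lam n r a).
  assert (Hl : 0 < l) by (unfold l, lam, Rpower; apply exp_pos).
  assert (HlM : l ^ n = M).
  { rewrite <- Rpower_pow by lra. unfold l, lam. rewrite Rpower_mult.
    rewrite Rinv_l. apply Rpower_1; lra. apply not_0_INR; lia. }
  set (x := qnorm q).
  assert (Hx : x ^ n <= M * sum_f_R0 (fun j => x ^ j) r).
  { unfold x. rewrite <- qnorm_pow.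
    assert (E : qnorm (qpow q n) = qnorm (qlower a q r)).
    { unfold hpoly in Hq. unfold qnorm. f_equal.
      destruct (qpow q n) as [a1 b1 c1 d1], (qlower a q r) as [a2 b2 c2 d2].
      unfold qadd, qzero in Hq; simpl in Hq. injection Hq; intros; simpl.
      assert (a1 = - a2) by lra. assert (b1 = - b2) by lra.
      assert (c1 = - c2) by lra. assert (d1 = - d2) by lra. subst. ring. }
    rewrite E. apply qlower_bound. }
  set (t := x / l).
  assert (Hxt : x = l * t) by (unfold t; field; lra).
  assert (Hkey : t <= 1 + Rmax l (l ^ r)).
  { apply (key l t n r Hl Hr ltac:(lia)).
    apply (Rmult_le_reg_l (l ^ n)). apply pow_lt; lra.
    rewrite <- Rpow_mult_distr, <- Hxt, HlM.
    replace (sum_f_R0 (fun j => l ^ j * t ^ j) r) with (sum_f_R0 (fun j => x ^ j) r).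
    exact Hx. apply sum_eq. intros. rewrite Hxt, Rpow_mult_distr. reflexivity. }
  rewrite Hxt.
  assert (E2 : l ^ 2 = l * l) by ring.
  assert (E3 : l ^ (r + 1) = l * l ^ r) by (rewrite Nat.add_1_r; reflexivity).
  rewrite E2, E3.
  apply Rle_trans with (l * (1 + Rmax l (l ^ r))). apply Rmult_le_compat_l; lra.
  unfold Rmax. destruct (Rle_dec l (l ^ r)); destruct (Rle_dec (l*l) (l * l ^ r)); try lra.
  all: first [ exfalso; apply n0; apply Rmult_le_compat_l; lra
             | assert (l * l ^ r < l * l) by lra; nra ].
Qed.
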